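(* Let $\boldsymbol{x},\overline{\boldsymbol{x}}\in\mathbb{T}^3$ and $\boldsymbol{v}=(1,0,0)$, and let $\varepsilon>0$. For $\underline{\omega}=(\omega_1,\omega_2,\dots)$ with $\omega_i\in\Omega_0$ define $\boldsymbol{x}_0=\boldsymbol{x}$, $\boldsymbol{v}_0=\boldsymbol{v}$, $\boldsymbol{x}_n=f_{\omega_n}(\boldsymbol{x}_{n-1})$, $\boldsymbol{v}_n=\dfrac{D_{\boldsymbol{x}_{n-1}}f_{\omega_n}\boldsymbol{v}_{n-1}}{|D_{\boldsymbol{x}_{n-1}}f_{\omega_n}\boldsymbol{v}_{n-1}|}$. Then there exist $N_3\in\mathbb{N}$ and $\underline{\omega}^{N_3}=(\omega_1,\dots,\omega_{N_3})\in\Omega_0^{N_3}$ such that $$f_{\underline{\omega}^{N_3}}(\boldsymbol{x})=\overline{\boldsymbol{x}}\qquad\text{and}\qquad \boldsymbol{v}_{N_3}=(1,0,0).$$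
   Context: $\mathbb{T}^3=\mathbb{R}^3/(2\pi\mathbb{Z})^3$ with points $\boldsymbol{x}=(x,y,z)$. Fix $U>0$ and let $\Omega_0=[-U,U]^3\times[0,2\pi)^3$, with elements $\omega=(\mathsf{A},\mathsf{B},\mathsf{C},\alpha,\beta,\gamma)$. Define maps of $\mathbb{T}^3$: $f_{(\mathsf{A},\alpha)}(x,y,z)=(x+\mathsf{A}\sin(z+\alpha),\ y+\mathsf{A}\cos(z+\alpha),\ z)$, $f_{(\mathsf{B},\beta)}(x,y,z)=(x,\ y+\mathsf{B}\sin(x+\beta),\ z+\mathsf{B}\cos(x+\beta))$, $f_{(\mathsf{C},\gamma)}(x,y,z)=(x+\mathsf{C}\cos(y+\gamma),\ y,\ z+\mathsf{C}\sin(y+\gamma))$, and $f_\omega=f_{(\mathsf{C},\gamma)}\circ f_{(\mathsf{B},\beta)}\circ f_{(\mathsf{A},\alpha)}$. For $\underline{\omega}^N=(\omega_1,\dots,\omega_N)$, $f_{\underline{\omega}^N}=f_{\omega_N}\circ\cdots\circ f_{\omega_1}$; $D_{\boldsymbol{x}}f_\omega$ is the Jacobian of $f_\omega$ at $\boldsymbol{x}$. *)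

(* Defs.v *)
From Stdlib Require Import Reals List.
From Coquelicot Require Import Coquelicot.
Open Scope R_scope.

(* Points of R^3 (lifts of points of T^3) and tangent vectors. *)
Definition vec3 := (R * R * R)%type.

Definition get (p : vec3) (j : nat) : R :=
  let '(a, b, c) := p in
  match j with 0%nat => a | 1%nat => b | _ => c end.

Definition set (p : vec3) (j : nat) (t : R) : vec3 :=
  let '(a, b, c) := p in
  match j with 0%nat => (t, b, c) | 1%nat => (a, t, c) | _ => (a, b, t) end.

Definition torus_eq (p q : vec3) : Prop :=
  forall j : nat, (j < 3)%nat -> exists k : Z, get p j - get q j = 2 * PI * IZR k.

Record Omega := mkOmega { oA : R; oB : R; oC : R; oal : R; obe : R; oga : R }.

Definition in_Omega0 (U : R) (w : Omega) : Prop :=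
  -U <= oA w <= U /\ -U <= oB w <= U /\ -U <= oC w <= U /\
  0 <= oal w < 2 * PI /\ 0 <= obe w < 2 * PI /\ 0 <= oga w < 2 * PI.

Definition fA (A al : R) (p : vec3) : vec3 :=
  let '(x, y, z) := p in (x + A * sin (z + al), y + A * cos (z + al), z).
Definition fB (B be : R) (p : vec3) : vec3 :=
  let '(x, y, z) := p in (x, y + B * sin (x + be), z + B * cos (x + be)).
Definition fC (C ga : R) (p : vec3) : vec3 :=
  let '(x, y, z) := p in (x + C * cos (y + ga), y, z + C * sin (y + ga)).

Definition f_omega (w : Omega) (p : vec3) : vec3 :=
  fC (oC w) (oga w) (fB (oB w) (obe w) (fA (oA w) (oal w) p)).

(* f_{omega^N} = f_{omega_N} o ... o f_{omega_1}, with ws = [omega_1; ...; omega_N] *)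
Definition f_seq (ws : list Omega) (p : vec3) : vec3 :=
  fold_left (fun q w => f_omega w q) ws p.

Definition jac (f : vec3 -> vec3) (x : vec3) (i j : nat) : R :=
  Derive (fun t => get (f (set x j t)) i) (get x j).

Definition jac_apply (f : vec3 -> vec3) (x v : vec3) : vec3 :=
  (jac f x 0 0 * get v 0 + jac f x 0 1 * get v 1 + jac f x 0 2 * get v 2,
   jac f x 1 0 * get v 0 + jac f x 1 1 * get v 1 + jac f x 1 2 * get v 2,
   jac f x 2 0 * get v 0 + jac f x 2 1 * get v 1 + jac f x 2 2 * get v 2).

Definition norm3 (v : vec3) : R :=
  sqrt (get v 0 ^ 2 + get v 1 ^ 2 + get v 2 ^ 2).

Definition normalize (v : vec3) : vec3 :=
  let n := norm3 v in (get v 0 / n, get v 1 / n, get v 2 / n).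

Definition step (xv : vec3 * vec3) (w : Omega) : vec3 * vec3 :=
  (f_omega w (fst xv), normalize (jac_apply (f_omega w) (fst xv) (snd xv))).

Definition traj (ws : list Omega) (x v : vec3) : vec3 * vec3 :=
  fold_left step ws (x, v).

(* Main.v *)
Require Import Defs.
From Stdlib Require Import Reals List Lra Lia ZArith.
From Coquelicot Require Import Coquelicot.
Open Scope R_scope.
From Stdlib Require Import Lra Lia ZArith.

Lemma sc_periodZ (s : R) (n : Z) :
  sin (s + 2 * PI * IZR n) = sin s /\ cos (s + 2 * PI * IZR n) = cos s.
Proof.
  destruct (Z_le_gt_dec 0 n) as [H|H].
  - assert (E : IZR n = INR (Z.to_nat n)) by (rewrite INR_IZR_INZ, Z2Nat.id; auto).
    rewrite E. replace (s + 2 * PI * INR (Z.to_nat n)) with (s + 2 * INR (Z.to_nat n) * PI) by ring.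
    split; [apply sin_period | apply cos_period].
  - assert (E : IZR n = - INR (Z.to_nat (- n))).
    { rewrite INR_IZR_INZ, Z2Nat.id; [rewrite opp_IZR; ring | lia]. }
    rewrite E. set (m := Z.to_nat (-n)).
    pose proof (sin_period (s - 2 * INR m * PI) m) as A.
    pose proof (cos_period (s - 2 * INR m * PI) m) as B.
    replace (s - 2 * INR m * PI + 2 * INR m * PI) with s in A, B by ring.
    replace (s + 2 * PI * - INR m) with (s - 2 * INR m * PI) by ring. auto.
Qed.

Lemma phase (z s : R) : exists al, 0 <= al < 2 * PI /\
  sin (z + al) = sin s /\ cos (z + al) = cos s.
Proof.
  pose proof PI_RGT_0.
  destruct (floor_ex ((s - z) / (2 * PI))) as [n [H1 H2]].
  exists (s - z - 2 * PI * IZR n). split.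
  - assert (2 * PI * IZR n <= s - z < 2 * PI * IZR n + 2 * PI).
    { split.
      + apply (Rmult_le_reg_l (/ (2*PI))). apply Rinv_0_lt_compat; lra.
        replace (/ (2 * PI) * (2 * PI * IZR n)) with (IZR n) by (field; lra).
        replace (/ (2 * PI) * (s - z)) with ((s - z) / (2 * PI)) by (field; lra). lra.
      + apply (Rmult_lt_reg_l (/ (2*PI))). apply Rinv_0_lt_compat; lra.
        replace (/ (2 * PI) * (2 * PI * IZR n + 2 * PI)) with (IZR n + 1) by (field; lra).
        replace (/ (2 * PI) * (s - z)) with ((s - z) / (2 * PI)) by (field; lra). lra. }
    lra.
  - replace (z + (s - z - 2 * PI * IZR n)) with (s + 2 * PI * IZR (- n))
      by (rewrite opp_IZR; ring).
    apply sc_periodZ.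
Qed.

Lemma D_id (f : R -> R) x : (forall t, f t = t + f 0) -> Derive f x = 1.
Proof.
  intro H. rewrite (Derive_ext f (fun t => t + f 0) x H).
  apply is_derive_unique. auto_derive; auto.
Qed.
Lemma D_cst (f : R -> R) x : (forall t, f t = f 0) -> Derive f x = 0.
Proof.
  intro H. rewrite (Derive_ext f (fun t => f 0) x H).
  apply Derive_const.
Qed.

Lemma jac_e1 (w : Omega) (p : vec3) : oB w = 0 ->
  normalize (jac_apply (f_omega w) p (1, 0, 0)) = (1, 0, 0).
Proof.
  intro HB. destruct w as [A B C al be ga]; simpl in HB; subst B.
  destruct p as [[a b] c].
  unfold jac_apply, jac. simpl get. simpl set.
  unfold f_omega, fA, fB, fC; simpl.
  rewrite !Rmult_0_r, !Rplus_0_r, !Rmult_1_r.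
  rewrite D_id, D_cst, D_cst; try (intro t; cbv beta; rewrite ?Rmult_0_l, ?Rplus_0_r, ?Rplus_0_l; ring).
  unfold normalize, norm3; simpl.
  replace (1 * (1 * 1) + 0 * (0 * 1) + 0 * (0 * 1)) with 1 by ring.
  rewrite sqrt_1. f_equal; [f_equal|]; field.
Qed.

Lemma move (U : R) (HU : 0 < U) (p : vec3) (j : nat) (a : R) :
  -U <= a <= U -> exists w, in_Omega0 U w /\ oB w = 0 /\
  f_omega w p = set p j (get p j + a).
Proof.
  intro Ha. pose proof PI_RGT_0 as HPI.
  destruct p as [[x y] z].
  destruct j as [|[|j]].
  - destruct (phase z (PI/2)) as [al [Hal [Hs Hc]]].
    exists (mkOmega a 0 0 al 0 0). split; [unfold in_Omega0; simpl; lra|split; [reflexivity|]].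
    unfold f_omega, fA, fB, fC; simpl.
    rewrite Hs, Hc, sin_PI2, cos_PI2. f_equal; [f_equal|]; ring.
  - destruct (phase z 0) as [al [Hal [Hs Hc]]].
    exists (mkOmega a 0 0 al 0 0). split; [unfold in_Omega0; simpl; lra|split; [reflexivity|]].
    unfold f_omega, fA, fB, fC; simpl.
    rewrite Hs, Hc, sin_0, cos_0. f_equal; [f_equal|]; ring.
  - destruct (phase y (PI/2)) as [ga [Hga [Hs Hc]]].
    exists (mkOmega 0 0 a 0 0 ga). split; [unfold in_Omega0; simpl; lra|split; [reflexivity|]].
    unfold f_omega, fA, fB, fC; simpl.
    rewrite !Rmult_0_l, !Rplus_0_r.
    rewrite Hs, Hc, sin_PI2, cos_PI2. f_equal; [f_equal|]; ring.
Qed.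

Lemma set_set (p : vec3) j t s : set (set p j t) j s = set p j s.
Proof. destruct p as [[x y] z]; destruct j as [|[|j]]; reflexivity. Qed.
Lemma get_set (p : vec3) j t : get (set p j t) j = t.
Proof. destruct p as [[x y] z]; destruct j as [|[|j]]; reflexivity. Qed.
Lemma set_get (p : vec3) j : set p j (get p j) = p.
Proof. destruct p as [[x y] z]; destruct j as [|[|j]]; reflexivity. Qed.

Lemma reach_n (U : R) (HU : 0 < U) (n : nat) : forall (p : vec3) (j : nat) (a : R),
  -U <= a <= U -> exists ws, List.Forall (in_Omega0 U) ws /\ List.Forall (fun w => oB w = 0) ws /\
  f_seq ws p = set p j (get p j + INR n * a).
Proof.
  induction n as [|n IH]; intros p j a Ha.
  - exists nil. split; [constructor|split; [constructor|]].
    simpl. replace (get p j + 0 * a) with (get p j) by ring. now rewrite set_get.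
  - destruct (move U HU p j a Ha) as [w [Hw [HB Hf]]].
    destruct (IH (set p j (get p j + a)) j a Ha) as [ws [H1 [H2 H3]]].
    exists (w :: ws). split; [constructor; auto|split; [constructor; auto|]].
    change (f_seq (w :: ws) p) with (f_seq ws (f_omega w p)). rewrite Hf, H3, set_set, get_set, S_INR. f_equal. ring.
Qed.

Lemma reach (U : R) (HU : 0 < U) (p : vec3) (j : nat) (d : R) :
  exists ws, List.Forall (in_Omega0 U) ws /\ List.Forall (fun w => oB w = 0) ws /\
  f_seq ws p = set p j d.
Proof.
  set (D := d - get p j).
  destruct (INR_archimed U (Rabs D)) as [n Hn]; [lra|].
  set (N := INR (S n)).
  assert (HN : INR n + 1 = N) by (unfold N; rewrite S_INR; ring).
  assert (Hn0 : 0 <= INR n) by apply pos_INR.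
  assert (HNU : Rabs D < N * U) by nra.
  apply Rabs_def2 in HNU.
  set (a := D / N).
  assert (Da : N * a = D) by (unfold a; field; lra).
  assert (Ha : -U <= a <= U) by (split; nra).
  destruct (reach_n U HU (S n) p j a Ha) as [ws [H1 [H2 H3]]].
  exists ws. split; [auto|split; [auto|]].
  rewrite H3. fold N. rewrite Da. unfold D. f_equal. ring.
Qed.

Lemma traj_e1 (ws : list Omega) : forall p, List.Forall (fun w => oB w = 0) ws ->
  snd (fold_left step ws (p, (1, 0, 0))) = (1, 0, 0).
Proof.
  induction ws as [|w ws IH]; intros p H.
  - reflexivity.
  - inversion H; subst. simpl. unfold step at 2. simpl fst. simpl snd.
    rewrite jac_e1 by auto. apply IH; auto.
Qed.

Theorem lemma3p4 (U : R) (HU : 0 < U) (x xbar : vec3) (eps : R) (Heps : 0 < eps) :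
  exists (N3 : nat) (ws : list Omega),
    length ws = N3 /\ List.Forall (in_Omega0 U) ws /\
    torus_eq (f_seq ws x) xbar /\
    snd (traj ws x (1, 0, 0)) = (1, 0, 0).
Proof.
  destruct (reach U HU x 0 (get xbar 0)) as [ws0 [A0 [B0 C0]]].
  destruct (reach U HU (f_seq ws0 x) 1 (get xbar 1)) as [ws1 [A1 [B1 C1]]].
  destruct (reach U HU (f_seq ws1 (f_seq ws0 x)) 2 (get xbar 2)) as [ws2 [A2 [B2 C2]]].
  exists (length (ws0 ++ ws1 ++ ws2)), (ws0 ++ ws1 ++ ws2).
  split; [reflexivity|].
  split; [apply Forall_app; split; auto; apply Forall_app; split; auto|].
  split.
  - assert (E : f_seq (ws0 ++ ws1 ++ ws2) x = xbar).
    { unfold f_seq in *. rewrite !fold_left_app. rewrite C0 in C1, C2. rewrite C1 in C2.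
      rewrite C0, C1, C2.
      destruct x as [[x1 x2] x3]; destruct xbar as [[y1 y2] y3]; reflexivity. }
    rewrite E. intros j _. exists 0%Z. simpl. ring.
  - apply traj_e1. apply Forall_app; split; auto; apply Forall_app; split; auto.
Qed.
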